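(* For every $k\in[-\pi,\pi)$, the eigenspace $\{u\in\ell^2(\mathbb Z;\mathbb C^6):\hat H_{\mathrm I}(k)u=0\}$ is even-dimensional.
   Context: Parameters $b_\pm>0$, $\delta_\pm$ with $b_\pm+\delta_\pm>0$, $c>0$. For $n\in\mathbb Z$ let $b_n=b_+$ ($n\ge0$), $b_n=b_-$ ($n\le-1$); $c_n=b_++\delta_+$ ($n\ge0$), $c_{-1}=c$, $c_n=b_-+\delta_-$ ($n\le-2$); $d_n=b_++\delta_+$ ($n\ge0$), $d_n=b_-+\delta_-$ ($n\le-1$). $\hat H_{\mathrm I}(k)$ acts on $u=\{(u_{j,n})_{j=1}^6\}_{n\in\mathbb Z}\in\ell^2(\mathbb Z;\mathbb C^6)$ by $(\hat H_{\mathrm I}(k)u)_{1,n}=-b_nu_{4,n}-b_nu_{5,n}-c_{n-1}e^{-ik}u_{6,n-1}$, $(\hat H_{\mathrm I}(k)u)_{2,n}=-b_nu_{4,n}-d_ne^{ik}u_{5,n}-b_nu_{6,n}$, $(\hat H_{\mathrm I}(k)u)_{3,n}=-c_nu_{4,n+1}-b_nu_{5,n}-b_nu_{6,n}$, $(\hat H_{\mathrm I}(k)u)_{4,n}=-b_nu_{1,n}-b_nu_{2,n}-c_{n-1}u_{3,n-1}$, $(\hat H_{\mathrm I}(k)u)_{5,n}=-b_nu_{1,n}-d_ne^{-ik}u_{2,n}-b_nu_{3,n}$, $(\hat H_{\mathrm I}(k)u)_{6,n}=-c_ne^{ik}u_{1,n+1}-b_nu_{2,n}-b_nu_{3,n}$.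 *)

(* Defs.v *)
From HB Require Import structures.
From mathcomp Require Import all_boot all_order all_algebra.
From mathcomp Require Import reals trigo.
From mathcomp Require Import complex.
Set Implicit Arguments. Unset Strict Implicit. Unset Printing Implicit Defensive.
Import Order.TTheory GRing.Theory Num.Theory.
Local Open Scope ring_scope.
Local Open Scope complex_scope.

Section HI.
Variable R : realType.
Local Notation C := R[i].

(* a state u = {(u_{j,n})_{j=1..6}}_{n in Z}; component j=1..6 is index j-1 : 'I_6 *)
Definition state := int -> 'I_6 -> C.

Variables (bp bm dp dm c : R).

Definition bn (n : int) : R := if (0 <= n) then bp else bm.
Definition cn (n : int) : R :=
  if (0 <= n) then bp + dp else if n == -1 then c else bm + dm.
Definition dn (n : int) : R := if (0 <= n) then bp + dp else bm + dm.

Definition expik (k : R) : C := (cos k) +i* (sin k).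
Definition expmik (k : R) : C := (cos k) -i* (sin k).

Definition HI (k : R) (u : state) : state := fun n j =>
  let b := (bn n)%:C in
  let u' (jj : nat) (m : int) := u m (inord jj) in
  match nat_of_ord j with
  | 0 => - b * u' 3 n - b * u' 4 n - (cn (n - 1))%:C * expmik k * u' 5 (n - 1)
  | 1 => - b * u' 3 n - (dn n)%:C * expik k * u' 4 n - b * u' 5 n
  | 2 => - (cn n)%:C * u' 3 (n + 1) - b * u' 4 n - b * u' 5 n
  | 3 => - b * u' 0 n - b * u' 1 n - (cn (n - 1))%:C * u' 2 (n - 1)
  | 4 => - b * u' 0 n - (dn n)%:C * expmik k * u' 1 n - b * u' 2 n
  | _ => - (cn n)%:C * expik k * u' 0 (n + 1) - b * u' 1 n - b * u' 2 n
  end.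

End HI.

Definition is_l2 (R : realType) (u : state R) : Prop :=
  exists M : R, forall N : nat,
    \sum_(i < (2 * N).+1) \sum_(j < 6) (complex.Re (u (i%:Z - N%:Z)%R j) ^+ 2 + complex.Im (u (i%:Z - N%:Z)%R j) ^+ 2) <= M.

Definition kerHI (R : realType) (bp bm dp dm c k : R) (u : state R) : Prop :=
  is_l2 u /\ forall n j, HI bp bm dp dm c k u n j = 0.

Definition has_dim (R : realType) (S : state R -> Prop) (d : nat) : Prop :=
  exists v : 'I_d -> state R,
    (forall i, S (v i)) /\
    (forall a : 'I_d -> R[i],
        (forall n j, \sum_(i < d) a i * v i n j = 0) -> forall i, a i = 0) /\
    (forall u, S u -> exists a : 'I_d -> R[i],
        forall n j, u n j = \sum_(i < d) a i * v i n j).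

(* Main.v *)
Require Import Defs.
From HB Require Import structures.
From mathcomp Require Import all_boot all_order all_algebra.
From mathcomp Require Import reals trigo.
From mathcomp Require Import complex.
From mathcomp Require Import ring lra.
From Stdlib Require Classical_Prop.
Import Order.TTheory GRing.Theory Num.Theory.
Local Open Scope ring_scope.
Local Open Scope complex_scope.

Section S.
Variable R : realType.
Variable k : R.
Local Notation C := R[i].

Definition g (n : int) : C := cos (n%:~R * k) -i* sin (n%:~R * k).

Lemma cmulE (a b c d : R) : (a +i* b) * (c +i* d) = (a * c - b * d) +i* (a * d + b * c).
Proof. by []. Qed.

Lemma gB1 n : g (n - 1) = g n * expik k.
Proof.
rewrite /g /expik cmulE intrB mulrBl cosB sinB; rewrite (_ : 1%:~R = 1) // mul1r; congr (_ +i* _); ring.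
Qed.

Lemma gD1 n : g (n + 1) = g n * expmik k.
Proof.
rewrite /g /expmik cmulE intrD mulrDl cosD sinD; rewrite (_ : 1%:~R = 1) // mul1r; congr (_ +i* _); ring.
Qed.

Lemma gJ n : g n * conjc (g n) = 1.
Proof.
rewrite /g /= cmulE. have -> : (1 : C) = 1 +i* 0 by [].
congr (_ +i* _); last by ring.
by rewrite -[RHS](cos2Dsin2 (n%:~R * k)); ring.
Qed.

Lemma cjB (x y : C) : conjc (x - y) = conjc x - conjc y. Proof. exact: rmorphB. Qed.
Lemma cjD (x y : C) : conjc (x + y) = conjc x + conjc y. Proof. exact: rmorphD. Qed.
Lemma cjN (x : C) : conjc (- x) = - conjc x. Proof. exact: rmorphN. Qed.
Lemma cjM (x y : C) : conjc (x * y) = conjc x * conjc y. Proof. exact: rmorphM. Qed.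
Lemma cjK (x : C) : conjc (conjc x) = x. Proof. exact: conjcK. Qed.
Lemma expJ : conjc (expik k) = expmik k. Proof. by []. Qed.
Lemma expmJ : conjc (expmik k) = expik k. Proof. by rewrite /expmik /expik /= opprK. Qed.
Lemma realJ (x : R) : conjc (x%:C) = x%:C. Proof. by rewrite /= oppr0. Qed.
Lemma expM : expmik k * expik k = 1.
Proof.
rewrite /expmik /expik cmulE. have -> : (1 : C) = 1 +i* 0 by [].
congr (_ +i* _); last by ring.
by rewrite -[RHS](cos2Dsin2 k); ring.
Qed.
Variables bp bm dp dm c : R.
Local Notation H := (HI bp bm dp dm c k).

Definition sh (j : nat) : nat := match j with 0=>3|1=>4|2=>5|3=>0|4=>1|_=>2 end.
Definition tw (u : state R) : state R := fun n j => g n * conjc (u n (inord (sh j))).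

Lemma HI_tw u n j : H (tw u) n j = g n * conjc (H u n (inord (sh j))).
Proof.
case: j => [[|[|[|[|[|[|j]]]]]] Hj] //; rewrite /HI /tw /= !inordK //=.
all: rewrite !(cjB, cjN, cjM) !realJ ?expmJ ?expJ ?gB1 ?gD1; ring: expM.
Qed.


Lemma sh_inv (j : 'I_6) : (inord (sh (@inord 5 (sh j))) : 'I_6) = j.
Proof.
apply/val_inj; case: j => [[|[|[|[|[|[|j]]]]]] Hj] //=; rewrite !inordK //.
Qed.

Lemma twK u n j : tw (tw u) n j = u n j.
Proof.
rewrite /tw cjM cjK sh_inv mulrA gJ mul1r //.
Qed.

Definition sq (z : C) : R := complex.Re z ^+ 2 + complex.Im z ^+ 2.

Lemma sq_tw (n : int) (x : C) : sq (g n * conjc x) = sq x.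
Proof.
case: x => a b; rewrite /g /= /sq /=.
have := cos2Dsin2 (n%:~R * k). set co := cos _. set si := sin _. move=> E.
rewrite -[RHS]mul1r -E; ring.
Qed.

Lemma sum6 (F : 'I_6 -> R) : \sum_(j<6) F j =
  F (inord 0) + F (inord 1) + F (inord 2) + F (inord 3) + F (inord 4) + F (inord 5).
Proof.
rewrite !big_ord_recl big_ord0 addr0 !addrA.
do ![congr (_ + _)]; congr F; apply/val_inj; rewrite /= inordK //.
Qed.

Definition rowsq (u : state R) n := \sum_(j < 6) sq (u n j).

Lemma rowsq_tw u n : rowsq (tw u) n = rowsq u n.
Proof.
rewrite /rowsq !sum6 /tw !sq_tw !inordK //=.
ring.
Qed.

Lemma l2_le (u v : state R) : (forall n, rowsq v n <= rowsq u n) -> is_l2 u -> is_l2 v.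
Proof.
move=> H [M HM]; exists M => N; apply: le_trans (HM N); apply: ler_sum => i _; exact: H.
Qed.

Lemma l2_tw u : is_l2 u -> is_l2 (tw u).
Proof. by apply: l2_le => n; rewrite rowsq_tw. Qed.

Hypothesis hbp : 0 < bp.
Hypothesis hbm : 0 < bm.
Hypothesis hdp : 0 < bp + dp.
Hypothesis hdm : 0 < bm + dm.
Hypothesis hc : 0 < c.

Lemma rC0 (x : R) : 0 < x -> x%:C != 0.
Proof. move=> h; apply/eqP => -[] /eqP; rewrite gt_eqF. by []. by []. Qed.

Lemma bn0 n : (bn bp bm n)%:C != 0.
Proof. by apply: rC0; rewrite /bn; case: ifP. Qed.
Lemma dn0 n : (dn bp bm dp dm n)%:C != 0.
Proof. by apply: rC0; rewrite /dn; case: ifP. Qed.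
Lemma cn0 n : (cn bp bm dp dm c n)%:C != 0.
Proof. by apply: rC0; rewrite /cn; case: ifP => //; case: ifP. Qed.
Lemma ex0 : expik k != 0.
Proof. apply/eqP => E; have := expM; rewrite E mulr0 => /eqP; rewrite eq_sym oner_eq0. by []. Qed.
Lemma emx0 : expmik k != 0.
Proof. apply/eqP => E; have := expM; rewrite E mul0r => /eqP; rewrite eq_sym oner_eq0. by []. Qed.

Lemma HI0 u n : H u n (inord 0) = - (bn bp bm n)%:C * u n (inord 3) - (bn bp bm n)%:C * u n (inord 4)
   - (cn bp bm dp dm c (n-1))%:C * expmik k * u (n-1) (inord 5).
Proof. by rewrite /HI inordK. Qed.
Lemma HI1 u n : H u n (inord 1) = - (bn bp bm n)%:C * u n (inord 3) - (dn bp bm dp dm n)%:C * expik k * u n (inord 4)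
   - (bn bp bm n)%:C * u n (inord 5).
Proof. by rewrite /HI inordK. Qed.
Lemma HI2 u n : H u n (inord 2) = - (cn bp bm dp dm c n)%:C * u (n + 1) (inord 3) - (bn bp bm n)%:C * u n (inord 4)
   - (bn bp bm n)%:C * u n (inord 5).
Proof. by rewrite /HI inordK. Qed.

Lemma solve1 (p a : C) : p != 0 -> p * a = 0 -> a = 0.
Proof. by move=> hp /eqP; rewrite mulf_eq0 (negbTE hp) => /eqP. Qed.

Lemma solve1N (p a : C) : p != 0 -> - p * a = 0 -> a = 0.
Proof. by move=> hp /eqP; rewrite mulNr oppr_eq0 mulf_eq0 (negbTE hp) => /eqP. Qed.

Lemma uniq0 u : (forall n, H u n (inord 0) = 0 /\ H u n (inord 1) = 0 /\ H u n (inord 2) = 0) ->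
  u 0 (inord 4) = 0 -> u 0 (inord 5) = 0 ->
  forall n, u n (inord 3) = 0 /\ u n (inord 4) = 0 /\ u n (inord 5) = 0.
Proof.
move=> HE y0 z0.
have fwd n : u n (inord 4) = 0 -> u n (inord 5) = 0 -> u (n+1) (inord 4) = 0 /\ u (n+1) (inord 5) = 0.
  move=> hy hz.
  have [_ [_ E2]] := HE n; have [E0 [E1 _]] := HE (n+1).
  rewrite HI2 hy hz in E2; rewrite HI0 addrK hz in E0; rewrite HI1 in E1.
  have hx : u (n+1) (inord 3) = 0.
    eapply solve1N; first exact: (cn0 n).
    by rewrite -[RHS]E2; ring.
  have hy' : u (n+1) (inord 4) = 0.
    eapply solve1N; first exact: (bn0 (n+1)).
    by rewrite -[RHS]E0 hx; ring.
  split => //.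
  eapply solve1N; first exact: (bn0 (n+1)).
    by rewrite -[RHS]E1 hx hy'; ring.
have bwd n : u n (inord 4) = 0 -> u n (inord 5) = 0 -> u (n-1) (inord 4) = 0 /\ u (n-1) (inord 5) = 0.
  move=> hy hz.
  have [E0 [E1 _]] := HE n; have [_ [_ E2]] := HE (n-1).
  rewrite HI1 hy hz in E1; rewrite HI0 hy in E0; rewrite HI2 subrK in E2.
  have hx : u n (inord 3) = 0.
    eapply solve1N; first exact: (bn0 n).
    by rewrite -[RHS]E1; ring.
  have hz' : u (n-1) (inord 5) = 0.
    eapply solve1N; first exact: (mulf_neq0 (cn0 (n-1)) emx0).
    by rewrite -[RHS]E0 hx; ring.
  split => //.
  eapply solve1N; first exact: (bn0 (n-1)).
    by rewrite -[RHS]E2 hx hz'; ring.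
have P n : u n (inord 4) = 0 /\ u n (inord 5) = 0.
  case: n => m.
    elim: m => [|m [IH1 IH2]]; first by [].
    have -> : Posz m.+1 = Posz m + 1 by rewrite -addn1.
    exact: fwd.
  elim: m => [|m [IH1 IH2]].
    by have := bwd 0 y0 z0.
  have -> : Negz m.+1 = Negz m - 1 by rewrite !NegzE -[(m.+2)%N]addn1 PoszD opprD.
  exact: bwd.
move=> n; have [hy hz] := P n; split => //.
have [_ [E1 _]] := HE n; rewrite HI1 hy hz in E1.
eapply solve1N; first exact: (bn0 n).
    by rewrite -[RHS]E1; ring.
Qed.

Definition KB (u : state R) := kerHI bp bm dp dm c k u /\ forall n (j : 'I_6), (j < 3)%N -> u n j = 0.
Definition bpart (u : state R) : state R := fun n j => if (3 <= j)%N then u n j else 0.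
Definition apart (u : state R) : state R := fun n j => if (j < 3)%N then u n j else 0.

Lemma H_bpart u n j : H (bpart u) n j = if (j < 3)%N then H u n j else 0.
Proof.
case: j => [[|[|[|[|[|[|j]]]]]] Hj] //; rewrite /HI /bpart /= !inordK //=; ring.
Qed.
Lemma H_apart u n j : H (apart u) n j = if (j < 3)%N then 0 else H u n j.
Proof.
case: j => [[|[|[|[|[|[|j]]]]]] Hj] //; rewrite /HI /apart /= !inordK //=; ring.
Qed.

Lemma sq_ge0 z : 0 <= sq z.
Proof. by rewrite /sq addr_ge0 // sqr_ge0. Qed.
Lemma sq0 : sq 0 = 0.
Proof. by rewrite /sq /= expr0n /= addr0. Qed.

Lemma l2_bpart u : is_l2 u -> is_l2 (bpart u).
Proof.
apply: l2_le => n; rewrite /rowsq !sum6 /bpart !inordK //= sq0.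
have := sq_ge0 (u n (inord 0)); have := sq_ge0 (u n (inord 1)); have := sq_ge0 (u n (inord 2)).
lra.
Qed.
Lemma l2_apart u : is_l2 u -> is_l2 (apart u).
Proof.
apply: l2_le => n; rewrite /rowsq !sum6 /apart !inordK //= sq0.
have := sq_ge0 (u n (inord 3)); have := sq_ge0 (u n (inord 4)); have := sq_ge0 (u n (inord 5)).
lra.
Qed.

Lemma cj0 : conjc (0 : C) = 0.
Proof. by rewrite /= oppr0. Qed.

Lemma ker_split u : kerHI bp bm dp dm c k u -> KB (bpart u) /\ KB (tw (apart u)).
Proof.
case=> hl hH; split; split; first split.
- exact: l2_bpart.
- by move=> n j; rewrite H_bpart hH; case: ifP.
- by move=> n j hj; rewrite /bpart leqNgt hj.
- split; first by apply: l2_tw; apply: l2_apart.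
  by move=> n j; rewrite HI_tw H_apart hH; case: ifP => _; rewrite cj0 mulr0.
- move=> n j hj; rewrite /tw (_ : apart u n _ = 0) ?cj0 ?mulr0 //; rewrite /apart.
  by move: hj; case: j => [[|[|[|j]]] Hj] //= _; rewrite inordK.
Qed.

Lemma recomb u n j : u n j = bpart u n j + tw (tw (apart u)) n j.
Proof. by rewrite twK /bpart /apart; case: (ltnP j 3) => _; rewrite ?addr0 ?add0r. Qed.

Lemma KB_tw v : KB v -> kerHI bp bm dp dm c k (tw v).
Proof.
case=> -[hl hH] _; split; first exact: l2_tw.
by move=> n j; rewrite HI_tw hH cj0 mulr0.
Qed.

Lemma tw_A v : KB v -> forall n (j : 'I_6), (3 <= j)%N -> tw v n j = 0.
Proof.
case=> _ hB n j hj; rewrite /tw hB ?cj0 ?mulr0 //.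
by move: hj; case: j => [[|[|[|[|[|[|j]]]]]] Hj] //= _; rewrite inordK.
Qed.

Lemma gne0 n : g n != 0.
Proof. apply/eqP => E; have := gJ n; rewrite E mul0r => /eqP; rewrite eq_sym oner_eq0. by []. Qed.

Lemma cj_sum m (F : 'I_m -> C) : conjc (\sum_(i < m) F i) = \sum_(i < m) conjc (F i).
Proof. exact: (big_morph _ cjD cj0). Qed.

Lemma cj_eq0 (x : C) : conjc x = 0 -> x = 0.
Proof. by move=> h; rewrite -[x]cjK h cj0. Qed.

Lemma double m : has_dim KB m -> has_dim (kerHI bp bm dp dm c k) (m + m).
Proof.
case=> v [vK [vI vS]].
have eL (i : 'I_m) : split (lshift m i) = inl i by exact: (unsplitK (inl i)).
have eR (i : 'I_m) : split (rshift m i) = inr i by exact: (unsplitK (inr i)).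
pose w (i : 'I_(m + m)) := match split i with inl j => v j | inr j => tw (v j) end.
exists w; split; [|split].
- by move=> i; rewrite /w; case: (split i) => j; [exact: (vK j).1 | exact: KB_tw].
- move=> a Ha.
  have Hs n j : \sum_(i < m + m) a i * w i n j =
     \sum_(i < m) a (lshift m i) * v i n j + \sum_(i < m) a (rshift m i) * tw (v i) n j.
    by rewrite big_split_ord /w /=; congr (_ + _); apply: eq_bigr => i _; rewrite ?eL ?eR.
  have HL : forall i, a (lshift m i) = 0.
    apply: vI => n j; case: (ltnP j 3) => hj.
      by apply: big1 => i _; rewrite (vK i).2 // mulr0.
    have Z : \sum_(i < m) a (rshift m i) * tw (v i) n j = 0.
      by apply: big1 => i _; rewrite (@tw_A (v i) (vK i)) // mulr0.
    by have := Ha n j; rewrite Hs Z addr0.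
  have HR : forall i, conjc (a (rshift m i)) = 0.
    apply: vI => n j; case: (ltnP j 3) => hj.
      by apply: big1 => i _; rewrite (vK i).2 // mulr0.
    have hj0 : (@inord 5 (sh j) < 3)%N.
      by move: hj; case: j => [[|[|[|[|[|[|j]]]]]] Hj] //= _; rewrite inordK.
    set j0 : 'I_6 := inord (sh j) in hj0 *.
    have Z : \sum_(i < m) a (lshift m i) * v i n j0 = 0.
      by apply: big1 => i _; rewrite (vK i).2 // mulr0.
    have := Ha n j0; rewrite Hs Z add0r.
    rewrite /tw /j0 sh_inv => E.
    apply: cj_eq0; rewrite cj_sum.
    eapply solve1; first exact: (gne0 n).
    rewrite -[RHS]E mulr_sumr; apply: eq_bigr => i _.
    by rewrite cjM cjK mulrCA.
  move=> i; rewrite -(splitK i); case: (split i) => j /=.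
    exact: HL.
  by apply: cj_eq0; apply: HR.
- move=> u Hu; have [HB HA] := @ker_split u Hu.
  have [a Ha] := vS _ HB; have [b Hb] := vS _ HA.
  exists (fun i => match split i with inl j => a j | inr j => conjc (b j) end) => n j.
  rewrite big_split_ord /w /= recomb; congr (_ + _).
    by rewrite Ha; apply: eq_bigr => i _; rewrite eL.
  rewrite {1}/tw Hb cj_sum mulr_sumr; apply: eq_bigr => i _.
  by rewrite eR /tw cjM mulrCA.
Qed.

Lemma H_lin1 u v a n j : H (fun n j => u n j - a * v n j) n j = H u n j - a * H v n j.
Proof. case: j => [[|[|[|[|[|[|j]]]]]] Hj] //; rewrite /HI /=; ring. Qed.
Lemma H_lin2 u v w a b n j : H (fun n j => u n j - a * v n j - b * w n j) n j =
   H u n j - a * H v n j - b * H w n j.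
Proof. case: j => [[|[|[|[|[|[|j]]]]]] Hj] //; rewrite /HI /=; ring. Qed.

Lemma KBz u : (forall n (j : 'I_6), (j < 3)%N -> u n j = 0) -> (forall n j, H u n j = 0) ->
  u 0 (inord 4) = 0 -> u 0 (inord 5) = 0 -> forall n j, u n j = 0.
Proof.
move=> hB hH y0 z0 n j; case: (ltnP j 3) => hj; first exact: hB.
have [h3 [h4 h5]] := @uniq0 u (fun n => conj (hH n _) (conj (hH n _) (hH n _))) y0 z0 n.
move: hj; case: j => [[|[|[|[|[|[|j]]]]]] Hj] //= _.
- by rewrite (_ : Ordinal Hj = inord 3) //; apply/val_inj; rewrite /= inordK.
- by rewrite (_ : Ordinal Hj = inord 4) //; apply/val_inj; rewrite /= inordK.
- by rewrite (_ : Ordinal Hj = inord 5) //; apply/val_inj; rewrite /= inordK.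
Qed.

Definition xd (u : state R) := u 0 (inord 4).
Definition yd (u : state R) := u 0 (inord 5).

Lemma KB_comb u u1 u2 a1 a2 : KB u -> KB u1 -> KB u2 ->
  xd u - a1 * xd u1 - a2 * xd u2 = 0 -> yd u - a1 * yd u1 - a2 * yd u2 = 0 ->
  forall n j, u n j = a1 * u1 n j + a2 * u2 n j.
Proof.
move=> [[_ h] hB] [[_ h1] hB1] [[_ h2] hB2] ex ey n j.
have := @KBz (fun n j => u n j - a1 * u1 n j - a2 * u2 n j).
move=> /(_ _ _ ex ey n j) E.
apply/eqP; rewrite -subr_eq0; apply/eqP; rewrite -[RHS]E; first ring.
- by move=> m i hi; rewrite hB // hB1 // hB2 // !mulr0 !subr0.
- by move=> m i; rewrite H_lin2 h h1 h2 !mulr0 !subr0.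
Qed.

Lemma dimKB : exists m, has_dim KB m.
Proof.
have [[u1 [u2 [K1 [K2 D]]]]|nA] := Classical_Prop.classic
  (exists u1 u2, KB u1 /\ KB u2 /\ xd u1 * yd u2 - yd u1 * xd u2 != 0).
  exists 2%N, (fun i : 'I_2 => if val i == 0%N then u1 else u2); split; [|split].
  - by move=> i; case: ifP.
  - move=> a Ha.
    have h4 := Ha 0 (inord 4); have h5 := Ha 0 (inord 5).
    rewrite !big_ord_recl !big_ord0 /= in h4 h5.
    rewrite -/(xd u1) -/(xd u2) in h4; rewrite -/(yd u1) -/(yd u2) in h5.
    set a0 := a ord0 in h4 h5; set a1 := a (lift ord0 ord0) in h4 h5.
    have e0 : a0 * (xd u1 * yd u2 - yd u1 * xd u2) =
       (a0 * xd u1 + (a1 * xd u2 + 0)) * yd u2 - (a0 * yd u1 + (a1 * yd u2 + 0)) * xd u2 by ring.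
    have e1 : a1 * (xd u1 * yd u2 - yd u1 * xd u2) =
       (a0 * yd u1 + (a1 * yd u2 + 0)) * xd u1 - (a0 * xd u1 + (a1 * xd u2 + 0)) * yd u1 by ring.
    rewrite h4 h5 !mul0r subrr in e0 e1.
    move: e0 e1 => /eqP; rewrite mulf_eq0 (negbTE D) orbF => /eqP e0 /eqP.
    rewrite mulf_eq0 (negbTE D) orbF => /eqP e1.
    case=> [[|[|i]] Hi] //.
      by rewrite (_ : Ordinal Hi = ord0) //; apply/val_inj.
    by rewrite (_ : Ordinal Hi = lift ord0 ord0) //; apply/val_inj.
  - move=> u Ku.
    exists (fun i : 'I_2 => if val i == 0%N then (xd u * yd u2 - yd u * xd u2) / (xd u1 * yd u2 - yd u1 * xd u2)
                           else (xd u1 * yd u - yd u1 * xd u) / (xd u1 * yd u2 - yd u1 * xd u2)) => n j.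
    rewrite !big_ord_recl big_ord0 /= addr0.
    apply: KB_comb => //; field; exact: D.
have [[u1 [K1 nz]]|nB] := Classical_Prop.classic (exists u1, KB u1 /\ ~ (xd u1 = 0 /\ yd u1 = 0)).
  exists 1%N, (fun _ => u1); split; [|split].
  - by [].
  - move=> a Ha i; rewrite (ord1 i).
    have h4 := Ha 0 (inord 4); have h5 := Ha 0 (inord 5).
    rewrite big_ord1 -/(xd u1) in h4; rewrite big_ord1 -/(yd u1) in h5.
    move: h4 h5 => /eqP; rewrite mulf_eq0 => /orP [/eqP //|/eqP hx].
    move=> /eqP; rewrite mulf_eq0 => /orP [/eqP //|/eqP hy].
    by case: nz.
  - move=> u Ku.
    have D : xd u1 * yd u - yd u1 * xd u = 0.
      apply/eqP; apply: contraT => hD; case: nA; by exists u1, u.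
    case: (boolP (xd u1 == 0)) => [/eqP hx|hx].
      have hy : yd u1 != 0 by apply/eqP => hy; case: nz.
      have hxu : xd u = 0.
        eapply solve1N; first exact: hy.
        by rewrite -[RHS]D hx; ring.
      exists (fun _ => yd u / yd u1) => n j; rewrite big_ord1.
      have -> : u n j = yd u / yd u1 * u1 n j + 0 * u1 n j.
        apply: (@KB_comb u u1 u1) => //.
          by rewrite hx hxu; ring.
        field; exact: hy.
      ring.
    exists (fun _ => xd u / xd u1) => n j; rewrite big_ord1.
    have -> : u n j = xd u / xd u1 * u1 n j + 0 * u1 n j.
      apply: (@KB_comb u u1 u1) => //.
        field; exact: hx.
      rewrite -[yd u](_ : (xd u1 * yd u - yd u1 * xd u) / xd u1 + yd u1 * xd u / xd u1 = yd u).
        by rewrite D; field; exact: hx.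
      field; exact: hx.
    ring.
exists 0%N, (fun _ _ _ => 0); split; [|split].
- by case.
- by move=> a _; case.
- move=> u Ku; exists (fun _ => 0) => n j; rewrite big_ord0.
  have hz : xd u = 0 /\ yd u = 0.
    apply: Classical_Prop.NNPP => h; case: nB; by exists u.
  have := @KB_comb u u u 0 0 Ku Ku Ku.
  rewrite !mul0r !subr0; case: hz => -> -> /(_ erefl erefl n j) ->; ring.
Qed.
End S.

Local Close Scope complex_scope.

Theorem proposition2 (R : realType) (bp bm dp dm c : R)
  (hbp : 0 < bp) (hbm : 0 < bm) (hdp : 0 < bp + dp) (hdm : 0 < bm + dm)
  (hc : 0 < c) (k : R) (hk : - pi <= k < pi) :
  exists d : nat, ~~ odd d /\ has_dim (kerHI bp bm dp dm c k) d.
Proof.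
have [m hm] := @dimKB R k bp bm dp dm c hbp hbm hdp hdm hc.
exists (m + m)%N; split; first by rewrite addnn odd_double.
exact: double hm.
Qed.
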